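(* Let $I\subset S=K[x_1,\dots,x_t]$ be an $\mathfrak m$-primary monomial ideal. Then $v(I)\le\operatorname{reg}(S/I)$.
   Context: $K$ is a field, $S$ is standard graded and $\mathfrak m=\langle x_1,\dots,x_t\rangle$. For a proper graded ideal $J$, the $v$-number is $v(J)=\min\{k\ge 0 : \exists f\in S_k,\ \mathcal P\in\operatorname{Ass}(S/J) \text{ with } (J:f)=\mathcal P\}$. $\operatorname{reg}$ denotes Castelnuovo–Mumford regularity: $\operatorname{reg}(M)=\max\{j-i : \beta_{i,j}(M)\ne 0\}$ for the graded Betti numbers $\beta_{i,j}$ of a finitely generated graded $S$-module $M$. *)

(* Defs.v *)
From HB Require Import structures.
From mathcomp Require Import all_boot all_algebra.
From mathcomp Require Import mpoly.
From Stdlib Require Import ClassicalEpsilon.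

Set Implicit Arguments.
Unset Strict Implicit.
Unset Printing Implicit Defensive.

Import GRing.Theory.
Local Open Scope ring_scope.

Section Defs.
Variables (K : fieldType) (t : nat).
Local Notation S := {mpoly K[t]}.

Definition in_ideal_gen (G : seq S) (f : S) : Prop :=
  exists c : seq S, size c = size G /\ f = \sum_(i < size G) c`_i * G`_i.

Definition monomial_ideal (I : pred S) : Prop :=
  exists s : seq 'X_{1..t},
    forall f, f \in I <-> in_ideal_gen [seq 'X_[m] | m <- s] f.

Definition max_ideal (f : S) : Prop :=
  in_ideal_gen [seq 'X_i | i <- enum 'I_t] f.

Definition is_ideal (J : pred S) : Prop :=
  0 \in J /\ (forall f g, f \in J -> g \in J -> f + g \in J) /\
  (forall f g, g \in J -> f * g \in J).

Definition proper (J : pred S) : Prop := exists f, f \notin J.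

Definition radical (J : pred S) (f : S) : Prop := exists n, f ^+ n \in J.

Definition primary (J : pred S) : Prop :=
  is_ideal J /\ proper J /\
  forall f g, f * g \in J -> f \notin J -> radical J g.

Definition m_primary (J : pred S) : Prop :=
  primary J /\ forall f, radical J f <-> max_ideal f.

Definition prime_ideal (P : pred S) : Prop :=
  is_ideal P /\ proper P /\ forall f g, f * g \in P -> f \in P \/ g \in P.

Definition colon_eq (J : pred S) (f : S) (P : pred S) : Prop :=
  forall g, g \in P <-> g * f \in J.

Definition Ass (J : pred S) (P : pred S) : Prop :=
  prime_ideal P /\ exists g, colon_eq J g P.

Definition vwitness (J : pred S) (k : nat) : Prop :=
  exists (f : S) (P : pred S), f \is k.-homog /\ Ass J P /\ colon_eq J f P.

Definition v_number (J : pred S) : nat :=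
  epsilon (inhabits 0%N)
    (fun k => vwitness J k /\ forall k', vwitness J k' -> (k <= k')%N).

(* beta_{i,j}(S/I) = dim_K Tor_i^S(S/I, K)_j, computed as the degree-j part of
   the i-th homology of the Koszul complex K(x_1..x_t; S/I).  For a monomial
   ideal I, the degree-j part of K_i(S/I) has K-basis the e_F (x) u with
   |F| = i, u a monomial not in I, deg u + i = j.  Such u have degree <= j,
   so they are enumerated by 'X_{1..t < j.+1}. *)
Definition kbasis (j : nat) := ({set 'I_t} * 'X_{1..t < j.+1})%type.

Definition kvalid (I : pred S) (i : nat) {j : nat} (b : kbasis j) : bool :=
  [&& #|b.1| == i, (mdeg b.2 + i == j)%N & 'X_[bmnm b.2] \notin I].

(* matrix (acting on row vectors) of the Koszul differential
   d(e_F (x) u) = sum_{k in F} (-1)^{#{l in F | l < k}} e_{F \ k} (x) x_k u,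
   from the degree-j part of K_i(S/I) to that of K_(i-1)(S/I) *)
Definition koszul_mx (I : pred S) (i j : nat) : 'M[K]_(#|{: kbasis j}|) :=
  \matrix_(r, c)
    (let b : kbasis j := enum_val r in let b' : kbasis j := enum_val c in
     if kvalid I i b then
       \sum_(k in b.1)
         (if [&& b'.1 == b.1 :\ k,
                 bmnm b'.2 == (bmnm b.2 + U_(k))%MM &
                 'X_[bmnm b'.2] \notin I]
          then (-1) ^+ #|[set l in b.1 | (l < k)%N]| else 0)
     else 0).

Definition betti (I : pred S) (i j : nat) : nat :=
  (#|[set b : kbasis j | kvalid I i b]|
   - \rank (koszul_mx I i j) - \rank (koszul_mx I i.+1 j))%N.

Definition reg_value (I : pred S) (r : nat) : Prop :=
  exists i j, betti I i j <> 0%N /\ r = (j - i)%N.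

Definition reg_quot (I : pred S) : nat :=
  epsilon (inhabits 0%N)
    (fun r => reg_value I r /\ forall r', reg_value I r' -> (r' <= r)%N).

End Defs.

(* Main.v *)
Require Import Defs.
From HB Require Import structures.
From mathcomp Require Import all_boot all_algebra.
From mathcomp Require Import mpoly.
From Stdlib Require Import Classical ClassicalEpsilon.
Set Implicit Arguments.
Unset Strict Implicit.
Unset Printing Implicit Defensive.
Import GRing.Theory.
Local Open Scope ring_scope.

Lemma nat_min_ex (P : nat -> Prop) n : P n ->
  exists m, P m /\ forall k, P k -> (m <= k)%N.
Proof.
elim: n {-2}n (leqnn n) => [|N IH] n hn Pn.
  exists n; split=> // k _; by move: hn; rewrite leqn0 => /eqP->.
case: (classic (exists k, (k < n)%N /\ P k)) => [[k [hk Pk]]|H].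
  by apply: (IH k) => //; rewrite -ltnS (leq_trans hk hn).
exists n; split=> // k Pk; rewrite leqNgt; apply/negP => hk; apply: H; by exists k.
Qed.

Lemma nat_max_ex (P : nat -> Prop) B n : P n -> (forall k, P k -> (k <= B)%N) ->
  exists m, P m /\ forall k, P k -> (k <= m)%N.
Proof.
move=> Pn hB.
have [m [Pm hm]] := nat_min_ex (P := fun m => forall k, P k -> (k <= m)%N) hB.
exists m; split=> //.
case: (classic (P m)) => // nPm.
exfalso; case: m hm Pm nPm => [|m] hm Pm nPm.
  by have := Pm n Pn; rewrite leqn0 => /eqP Hn; apply: nPm; rewrite -Hn.
have : (m.+1 <= m)%N; last by rewrite ltnn.
apply: hm => k Pk; have := Pm k Pk; rewrite leq_eqVlt => /orP[/eqP Hk|//].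
by exfalso; apply: nPm; rewrite -Hk.
Qed.

Lemma rank_le_nzrows (F : fieldType) m n (M : 'M[F]_(m, n)) :
  (\rank M <= #|[set r | row r M != 0%R]|)%N.
Proof.
set S := [set r | row r M != 0%R].
pose A := rowsub (fun i : 'I_#|S| => enum_val i) M.
apply: (leq_trans _ (rank_leq_row A)); apply: mxrankS.
apply/row_subP => i.
case: (boolP (i \in S)) => Hi.
  rewrite -(enum_rankK_in Hi Hi) -row_rowsub; exact: row_sub.
by move: Hi; rewrite inE negbK => /eqP ->; exact: sub0mx.
Qed.

Section Main.
Variables (K : fieldType) (t : nat).
Local Notation S := {mpoly K[t]}.

Lemma id_mul (I : pred S) : is_ideal I -> forall f g, g \in I -> f * g \in I.
Proof. by case=> _ [_ H]. Qed.
Lemma id_mulr (I : pred S) : is_ideal I -> forall f g, g \in I -> g * f \in I.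
Proof. by move=> hI f g Hg; rewrite mulrC; apply: id_mul. Qed.
Lemma id_add (I : pred S) : is_ideal I -> forall f g, f \in I -> g \in I -> f + g \in I.
Proof. by case=> _ [H _]. Qed.
Lemma id_0 (I : pred S) : is_ideal I -> 0 \in I.
Proof. by case. Qed.
Lemma id_sub (I : pred S) : is_ideal I -> forall f g, f \in I -> g \in I -> f - g \in I.
Proof. by move=> hI f g Hf Hg; apply: id_add => //; rewrite -mulN1r; apply: id_mul. Qed.
Lemma id_sum (I : pred S) (T : eqType) (s : seq T) (F : T -> S) : is_ideal I ->
  (forall x, x \in s -> F x \in I) -> \sum_(x <- s) F x \in I.
Proof.
move=> hI; elim: s => [|x s IH] H; first by rewrite big_nil id_0.
rewrite big_cons; apply: id_add => //; first by apply: H; rewrite mem_head.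
by apply: IH => y Hy; apply: H; rewrite inE Hy orbT.
Qed.

Lemma id_scale (I : pred S) : is_ideal I -> forall c p, c != 0 -> c *: p \in I -> p \in I.
Proof.
move=> hI c p hc H; have -> : p = c^-1%:MP * (c *: p).
  by rewrite mul_mpolyC scalerA mulVf // scale1r.
exact: id_mul.
Qed.

Lemma one_notin (I : pred S) : is_ideal I -> Defs.proper I -> (1 : S) \notin I.
Proof.
move=> hI [f Hf]; apply/negP => H1; move/negP: Hf; apply.
by rewrite -(mulr1 f); apply: id_mul.
Qed.

Lemma sum_map_gen (s : seq 'I_t) (f g : 'I_t -> S) :
  \sum_(i < size [seq f x | x <- s]) [seq g x | x <- s]`_i * [seq f x | x <- s]`_i
  = \sum_(x <- s) g x * f x.
Proof.
elim: s => [|x s IH]; first by rewrite big_ord0 big_nil.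
by rewrite big_ord_recl big_cons /= -IH.
Qed.

Lemma max_ideal_X (k : 'I_t) : max_ideal ('X_k : S).
Proof.
exists [seq (x == k)%:R | x <- enum 'I_t]; split; first by rewrite !size_map.
rewrite sum_map_gen big_enum /= (bigD1 k) //= eqxx mul1r big1 ?addr0 //.
by move=> i /negPf ->; rewrite mul0r.
Qed.

Lemma X_pow_in (I : pred S) : m_primary I ->
  exists N, forall k : 'I_t, ('X_k : S) ^+ N \in I.
Proof.
move=> [[hI _] hr].
have H : forall k : 'I_t, exists n, ('X_k : S) ^+ n \in I.
  by move=> k; apply/hr/max_ideal_X.
have [n Hn] := fin_all_exists H.
exists (\max_k n k) => k.
by rewrite -(subnK (leq_bigmax k)) exprD; apply: id_mul.
Qed.

Lemma notin_bound (I : pred S) N : is_ideal I ->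
  (forall k : 'I_t, ('X_k : S) ^+ N \in I) ->
  forall m : 'X_{1..t}, ('X_[m] : S) \notin I -> (mdeg m <= t * N)%N.
Proof.
move=> hI hN m Hm.
have lt : forall k, (m k < N)%N.
  move=> k; rewrite ltnNge; apply/negP => Hk; move/negP: Hm; apply.
  have le : (U_(k) *+ N <= m)%MM.
    apply/mnm_lepP => i; rewrite mulmnE mnm1E.
    by case: eqP => [<-|_]; rewrite ?mul1n ?mul0n.
  rewrite -(submK le) mpolyXD -mpolyXn; exact: id_mul.
rewrite mdegE -[t in (_ <= t * _)%N]card_ord -sum_nat_const.
by apply: leq_sum => i _; apply: ltnW.
Qed.

Lemma socle_ex (I : pred S) N : is_ideal I -> Defs.proper I ->
  (forall k : 'I_t, ('X_k : S) ^+ N \in I) ->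
  exists u : 'X_{1..t}, ('X_[u] : S) \notin I /\
     forall k : 'I_t, ('X_[u + U_(k)] : S) \in I.
Proof.
move=> hI hp hN.
pose T := 'X_{1..t < (t * N).+1}.
pose P := fun b : T => ('X_[bmnm b] : S) \notin I.
have P0 : P (@bm0 t (t * N)) by rewrite /P /= mpolyX0; exact: one_notin.
case: (arg_maxnP (fun b : T => mdeg (bmnm b)) P0) => b Pb Hmax.
exists (bmnm b); split => // k.
apply/negPn/negP => Hk.
have Hd : (mdeg (bmnm b + U_(k)) < (t * N).+1)%N.
  by rewrite ltnS; apply: (notin_bound hI hN).
have := Hmax (BMultinom Hd) Hk; rewrite /= mdegD mdeg1 addn1 ltnn.
done.
Qed.

Lemma key1 (I : pred S) (u : 'X_{1..t}) : is_ideal I ->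
  (forall k : 'I_t, ('X_[u + U_(k)] : S) \in I) ->
  forall g : S, g@_0 = 0 -> g * 'X_[u] \in I.
Proof.
move=> hI hs g hg.
rewrite [g](mpolyE g) big_distrl /=; apply: id_sum => // m Hm.
rewrite -scalerAl -mpolyXD -mul_mpolyC; apply: id_mul => //.
have mn0 : m != 0%MM.
  by apply/eqP => E; move: Hm; rewrite mcoeff_msupp E hg eqxx.
have [k Hk] : exists k, m k != 0%N.
  apply: NNPP => H; move/eqP: mn0; apply; apply/mnmP => i; rewrite mnm0E.
  by apply/eqP; apply: NNPP => Hi; apply: H; exists i; apply/negP.
have le : (U_(k) <= m)%MM by rewrite lep1mP.
rewrite -(submK le).
have -> : (m - U_(k) + U_(k) + u = (m - U_(k)) + (u + U_(k)))%MM.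
  by apply/mnmP => i; rewrite !mnmDE addnAC addnA.
by rewrite mpolyXD; apply: id_mul.
Qed.

Lemma key2 (I : pred S) (u : 'X_{1..t}) : is_ideal I ->
  ('X_[u] : S) \notin I ->
  (forall k : 'I_t, ('X_[u + U_(k)] : S) \in I) ->
  forall g : S, g * 'X_[u] \in I -> g@_0 = 0.
Proof.
move=> hI hu hs g hg.
apply/eqP; apply: contraR hu => hc.
set c := g@_0.
have h0 : (g - c%:MP)@_0 = 0 by rewrite mcoeffB mcoeffC eqxx mulr1 subrr.
have := key1 hI hs h0 => hh.
have : c%:MP * 'X_[u] \in I.
  have -> : c%:MP * 'X_[u] = g * 'X_[u] - (g - c%:MP) * 'X_[u] :> S.
    by rewrite mulrBl opprB addrC subrK.
  exact: id_sub.
rewrite mul_mpolyC; exact: id_scale.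
Qed.

Lemma vwit (I : pred S) (u : 'X_{1..t}) : is_ideal I ->
  ('X_[u] : S) \notin I ->
  (forall k : 'I_t, ('X_[u + U_(k)] : S) \in I) ->
  vwitness I (mdeg u).
Proof.
move=> hI hu hs.
pose P : pred S := fun g => g * 'X_[u] \in I.
have colon : colon_eq I 'X_[u] P by move=> g; split.
exists 'X_[u], P; split; first by rewrite dhomogX.
split; last exact: colon.
split; last by exists 'X_[u].
split; [split; [|split]|split].
- by rewrite unfold_in /= mul0r id_0.
- by move=> f g; rewrite !unfold_in /= mulrDl; apply: id_add.
- by move=> f g; rewrite !unfold_in /= -mulrA; apply: id_mul.
- by exists 1; rewrite unfold_in /= mul1r.
- move=> f g; rewrite !unfold_in /= => H.
  have := key2 hI hu hs H; rewrite rmorphM /= => /eqP; rewrite mulf_eq0.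
  by case/orP => /eqP H0; [left|right]; apply: key1.
Qed.

Lemma koszul_top0 (I : pred S) j : koszul_mx I t.+1 j = 0.
Proof.
apply/matrixP => r c; rewrite !mxE /=.
rewrite /kvalid.
have : (#|(enum_val r : kbasis t j).1| <= t)%N.
  by rewrite -[X in (_ <= X)%N]card_ord max_card.
by case: eqP => // ->; rewrite ltnn.
Qed.

Lemma betti_pos (I : pred S) (u : 'X_{1..t}) :
  ('X_[u] : S) \notin I ->
  (forall k : 'I_t, ('X_[u + U_(k)] : S) \in I) ->
  betti I t (mdeg u + t) <> 0%N.
Proof.
move=> hu hs.
set j := (mdeg u + t)%N.
have bd : (mdeg u < j.+1)%N by rewrite ltnS leq_addr.
pose b0 : kbasis t j := (setT, BMultinom bd).
set V := [set b : kbasis t j | kvalid I t b].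
have kb0 : kvalid I t b0.
  by rewrite /kvalid /= cardsT card_ord !eqxx hu.
have b0V : b0 \in V by rewrite inE.
set M := koszul_mx I t j.
have Hrows : forall r, row r M != 0%R -> enum_val r \in V :\ b0.
  move=> r; apply: contraR; rewrite !inE negb_and negbK => H.
  apply/eqP/rowP => c; rewrite !mxE /=.
  case/orP: H => [/eqP E|]; last by move/negPf ->.
  rewrite E kb0 /=; apply: big1 => k _ /=.
  case: eqP => //= _; case: eqP => //= ->.
  by rewrite hs.
have Hrk : (\rank M < #|V|)%N.
  apply: (leq_ltn_trans (rank_le_nzrows M)).
  rewrite (cardsD1 b0 V) b0V add1n ltnS.
  rewrite -(card_imset _ enum_val_inj); apply: subset_leq_card.
  apply/subsetP => x /imsetP [r]; rewrite inE => Hr ->; exact: Hrows.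
rewrite /betti -/M koszul_top0 mxrank0 subn0.
by move/eqP; rewrite subn_eq0 leqNgt Hrk.
Qed.

Lemma reg_bound (I : pred S) N : is_ideal I ->
  (forall k : 'I_t, ('X_k : S) ^+ N \in I) ->
  forall r, reg_value I r -> (r <= t * N)%N.
Proof.
move=> hI hN r [i [j [hb ->]]].
have : (0 < #|[set b : kbasis t j | kvalid I i b]|)%N.
  rewrite lt0n; apply/negP => /eqP E; apply: hb; by rewrite /betti E.
rewrite card_gt0 => /set0Pn [b]; rewrite inE /kvalid => /and3P [_ /eqP E Hn].
by rewrite -E addnK; exact: (notin_bound hI hN).
Qed.
End Main.

Theorem theorem4p19 (K : fieldType) (t : nat) (I : pred {mpoly K[t]}) :
  monomial_ideal I -> m_primary I ->
  (v_number I <= reg_quot I)%N.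
Proof.
move=> _ hm.
have hI : is_ideal I by case: hm => [[]].
have hp : Defs.proper I by case: hm => [[_ []]].
have [N hN] := X_pow_in hm.
have [u [hu hs]] := socle_ex hI hp hN.
have hv := vwit hI hu hs.
have hr : reg_value I (mdeg u).
  by exists t, (mdeg u + t)%N; split; [exact: betti_pos | rewrite addnK].
have [v Hv] := nat_min_ex hv.
have [r Hr] := nat_max_ex hr (reg_bound hI hN).
have [_ Hv2] : vwitness I (v_number I) /\ forall k', vwitness I k' -> (v_number I <= k')%N
  := epsilon_spec (inhabits 0%N) (fun k => vwitness I k /\ forall k', vwitness I k' -> (k <= k')%N) (ex_intro _ v Hv).
have [_ Hr2] : reg_value I (reg_quot I) /\ forall r', reg_value I r' -> (r' <= reg_quot I)%N
  := epsilon_spec (inhabits 0%N) (fun r => reg_value I r /\ forall r', reg_value I r' -> (r' <= r)%N) (ex_intro _ r Hr).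
exact: (leq_trans (Hv2 _ hv) (Hr2 _ hr)).
Qed.
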